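(* Let $G$ be a graph, $\mathscr{C}$ a skew graph category and $F=\{(K,g_{\mathbf{a}}^{-1}g_{\mathbf{b}})\mid(K,\mathbf{a},\mathbf{b})\in\mathscr{C}\}$ the corresponding graph fibration. Let $K$ be the greatest subgraph of $G$ contained in $F$, i.e. a subgraph $K\subset G$ with $F(K)\ne\emptyset$ such that every subgraph $H\subset G$ with $F(H)\neq\emptyset$ satisfies $H\subset K$. Then for all $k,l\in\mathbb{N}_0$ the vector space $\mathscr{C}^G(k,l)$ has the linear basis $\{\hat T^G_{(K,\mathbf{a},\mathbf{b})}\mid[\mathbf{a},\mathbf{b}]\in W^{\mathscr{C}}_K(k,l)\}$.
   Context: Graphs are finite, undirected, without multiple edges, loops allowed, up to isomorphism; $N_k$ is the edgeless graph on $k$ vertices; graph homomorphisms map edges (including loops) to edges; $H\subset G$ means $H$ is (isomorphic to) a subgraph of $G$. $\mathbb{Z}_2^{*V}$ is the group generated by the set $V$ subject to $v^2=e$; $g_{\mathbf{a}}$ is the product of the entries of a tuple $\mathbf{a}$. A vertex overlap of graphs $K,H$ is a subset $f\subset V(K)\times V(H)$ in which each vertex occurs at most once; $K\cup_fH$ is the quotient of $K\sqcup H$ identifying $v$ with $w$ for $(v,w)\in f$, with induced maps $f_K,f_H$. Bilabelled graph: $(K,\mathbf{a},\mathbf{b})$, $\mathbf{a}\in V(K)^k$, $\mathbf{b}\in V(K)^l$, up to isomorphism preserving tuples; $\mathscr{C}(k,l)$ those in $\mathscr{C}$ with $k$ inputs, $l$ outputs. Operations: $f$-union $(K,\mathbf{a},\mathbf{b})\cup_f(H,\mathbf{c},\mathbf{d})=(K\cup_fH,f_K(\mathbf{a})f_H(\mathbf{c}),f_K(\mathbf{b})f_H(\mathbf{d}))$;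 composition (for $|\mathbf{b}|=|\mathbf{c}|$) $(H,\mathbf{c},\mathbf{d})\cdot(K,\mathbf{a},\mathbf{b})=(H\cdot K,\mathbf{a},\mathbf{d})$ with $H\cdot K$ the quotient of $K\sqcup H$ identifying $b_i$ with $c_i$; involution swaps the tuples. $\ker\mathbf{b}$ is the partition of positions by equal entries. A skew graph category is a set of bilabelled graphs containing $(N_0,\emptyset,\emptyset)$, $(M,(v),(v))$, $(M,\emptyset,(v,v))$ ($M$ the one-vertex loopless graph), closed under all $f$-unions, under compositions $\mathbf{H}\cdot\mathbf{K}$ with $\mathbf{K}=(K,\mathbf{a},\mathbf{b}),\mathbf{H}=(H,\mathbf{c},\mathbf{d})$, $\ker\mathbf{b}=\ker\mathbf{c}$, and under involution. For a set $F$ of pairs $(K,a)$ (up to isomorphism), $F(K):=\{a\mid(K,a)\in F\}$. With the vertices of $G$ labelled $1,\dots,n$, $\hat T^G_{(K,\mathbf{a},\mathbf{b})}\colon(\mathbb{C}^n)^{\otimes k}\to(\mathbb{C}^n)^{\otimes l}$ has entries $\#\{\phi\colon K\to G\text{ injective homomorphism}\mid\phi(\mathbf{a})=\mathbf{i},\phi(\mathbf{b})=\mathbf{j}\}$ at position $(\mathbf{j},\mathbf{i})$, and $\mathscr{C}^G(k,l):=\mathrm{span}\{\hat T^G_{\mathbf{H}}\mid\mathbf{H}\in\mathscr{C}(k,l)\}$. $W_K(k,l):=(V(K)^k\times V(K)^l)/\mathrm{Aut}\,K$, with classes $[\mathbf{a},\mathbf{b}]$; $W^{\mathscr{C}}_K(k,l):=\{[\mathbf{a},\mathbf{b}]\in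 W_K(k,l)\mid(K,\mathbf{a},\mathbf{b})\in\mathscr{C}(k,l)\}$ ($\hat T^G_{(K,\mathbf{a},\mathbf{b})}$ depends only on the class). *)

(* Defs.v *)
From mathcomp Require Import all_boot all_algebra all_field.
Set Implicit Arguments. Unset Strict Implicit. Unset Printing Implicit Defensive.
Import GRing.Theory.

(* Finite undirected graphs, loops allowed, no multiple edges.               *)
Record graph := Graph {
  gn : nat;
  gadj : rel 'I_gn;
  gsym : symmetric gadj }.

(* H \subset G (up to isomorphism): H is isomorphic to a subgraph of G,
   i.e. there is an injective homomorphism H -> G. *)
Definition subgraph (H G : graph) : Prop :=
  exists h : 'I_(gn H) -> 'I_(gn G),
    injective h /\ (forall x y, gadj x y -> gadj (h x) (h y)).

Definition empty_rel (n : nat) : rel 'I_n := fun _ _ => false.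
Lemma empty_rel_sym n : symmetric (@empty_rel n). Proof. by []. Qed.
Definition N0 : graph := Graph (@empty_rel_sym 0).
Definition Mgraph : graph := Graph (@empty_rel_sym 1).
Definition vM : 'I_(gn Mgraph) := ord0.

Record bgraph := BG {
  bgr : graph;
  bin : seq 'I_(gn bgr);
  bout : seq 'I_(gn bgr) }.

Definition biso (X Y : bgraph) : Prop :=
  exists h : 'I_(gn (bgr X)) -> 'I_(gn (bgr Y)),
    bijective h /\ (forall x y, gadj x y = gadj (h x) (h y)) /\
    map h (bin X) = bin Y /\ map h (bout X) = bout Y.

Definition overlap (m p : nat) (f : 'I_m -> 'I_p -> bool) : Prop :=
  (forall v w w', f v w -> f v w' -> w = w') /\
  (forall v v' w, f v w -> f v' w -> v = v').

(* [glue K H f G fK fH]: G, with the maps fK : V(K) -> V(G), fH : V(H) -> V(G),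
   is (a representative of the isomorphism class of) the quotient K \cup_f H
   of the disjoint union K \sqcup H identifying v with w for f v w, the maps
   fK, fH being the induced ones.  (For a vertex overlap f the quotient map is
   injective on K and on H, jointly surjective, identifies exactly the pairs
   in f, and the edges of the quotient are the images of the edges.) *)
Definition glue (K H G : graph) (f : 'I_(gn K) -> 'I_(gn H) -> bool)
    (fK : 'I_(gn K) -> 'I_(gn G)) (fH : 'I_(gn H) -> 'I_(gn G)) : Prop :=
  [/\ injective fK, injective fH,
      (forall z, (exists v, fK v = z) \/ (exists w, fH w = z)),
      (forall v w, fK v = fH w <-> f v w) &
      (forall x y, gadj x y <->
         (exists v v', [/\ fK v = x, fK v' = y & gadj v v']) \/
         (exists w w', [/\ fH w = x, fH w' = y & gadj w w']))].

Definition ker_eq (m p : nat) (b : seq 'I_m) (c : seq 'I_p) : Prop :=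
  size b = size c /\
  {in zip b c &, forall u u' : 'I_m * 'I_p, (u.1 == u'.1) = (u.2 == u'.2)}.

Definition comp_rel (m p : nat) (b : seq 'I_m) (c : seq 'I_p) :
    'I_m -> 'I_p -> bool := fun v w => (v, w) \in zip b c.

Definition iso_closed (C : bgraph -> Prop) : Prop :=
  forall X Y, biso X Y -> C X -> C Y.

Record skew_graph_category (C : bgraph -> Prop) : Prop := {
  sgc_iso : iso_closed C;
  sgc_N0 : C (@BG N0 [::] [::]);
  sgc_M1 : C (@BG Mgraph [:: vM] [:: vM]);
  sgc_M2 : C (@BG Mgraph [::] [:: vM; vM]);
  sgc_union : forall (X Y : bgraph) (G : graph) f fK fH,
      C X -> C Y -> overlap f -> @glue (bgr X) (bgr Y) G f fK fH ->
      C (@BG G (map fK (bin X) ++ map fH (bin Y))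
               (map fK (bout X) ++ map fH (bout Y)));
  sgc_comp : forall (X Y : bgraph) (G : graph) fK fH,
      C X -> C Y -> ker_eq (bout X) (bin Y) ->
      @glue (bgr X) (bgr Y) G (comp_rel (bout X) (bin Y)) fK fH ->
      C (@BG G (map fK (bin X)) (map fH (bout Y)));
  sgc_inv : forall X, C X -> C (@BG (bgr X) (bout X) (bin X)) }.

Definition Ckl (C : bgraph -> Prop) (k l : nat) (X : bgraph) : Prop :=
  [/\ C X, size (bin X) = k & size (bout X) = l].

(* Elements of Z_2^{*V} are represented by reduced words (no two equal       *)
(* adjacent letters); [reduce] computes the reduced word of a product.       *)
Definition red_cons (T : eqType) (x : T) (w : seq T) : seq T :=
  if w is y :: w' then (if x == y then w' else x :: w) else [:: x].
Definition reduce (T : eqType) (s : seq T) : seq T := foldr (@red_cons T) [::] s.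

(* g_a^{-1} g_b = a_k ... a_1 b_1 ... b_l  (each generator is an involution) *)
Definition gab (T : eqType) (a b : seq T) : seq T := reduce (rev a ++ b).

Definition fib (C : bgraph -> Prop) (K : graph) (g : seq 'I_(gn K)) : Prop :=
  exists a b : seq 'I_(gn K), C (@BG K a b) /\ g = gab a b.

Definition fib_nonempty (C : bgraph -> Prop) (K : graph) : Prop :=
  exists g, @fib C K g.

(* The maps \hat T^G_(K,a,b) : (C^n)^{\otimes k} -> (C^n)^{\otimes l},        *)
(* as arrays indexed by (j, i) with j an l-tuple and i a k-tuple of vertices. *)
Definition tens (n k l : nat) := {ffun l.-tuple 'I_n * k.-tuple 'I_n -> algC^o}.

Definition inj_homs (K G : graph) : {set {ffun 'I_(gn K) -> 'I_(gn G)}} :=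
  [set phi : {ffun 'I_(gn K) -> 'I_(gn G)} | injectiveb phi &&
             [forall x, forall y, gadj x y ==> gadj (phi x) (phi y)]].

Definition That (G : graph) (k l : nat) (X : bgraph) : tens (gn G) k l :=
  [ffun ji => ((#|[set phi in inj_homs (bgr X) G |
                  (map phi (bin X) == val ji.2) &&
                  (map phi (bout X) == val ji.1)]|)%:R)%R].

Local Open Scope ring_scope.

Definition lin_span (R : pzRingType) (V : lmodType R) (P : V -> Prop) (v : V)
  : Prop :=
  exists (m : nat) (vs : 'I_m -> V) (c : 'I_m -> R),
    (forall i, P (vs i)) /\ v = \sum_(i < m) c i *: vs i.

Definition lin_indep (R : pzRingType) (V : lmodType R) (P : V -> Prop) : Prop :=
  forall (m : nat) (vs : 'I_m -> V) (c : 'I_m -> R),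
    injective vs -> (forall i, P (vs i)) ->
    \sum_(i < m) c i *: vs i = 0 -> forall i, c i = 0.

Definition is_basis_of (R : pzRingType) (V : lmodType R) (S P : V -> Prop)
  : Prop :=
  (forall v, S v <-> lin_span P v) /\ lin_indep P.

Definition CG (C : bgraph -> Prop) (G : graph) (k l : nat) : tens (gn G) k l -> Prop :=
  lin_span (fun v => exists X, Ckl C k l X /\ v = That G k l X).

(* {\hat T^G_(K,a,b) | [a,b] \in W^C_K(k,l)}; since \hat T^G_(K,a,b) depends
   only on the Aut K-class [a,b], this is the set of \hat T^G_(K,a,b) over
   representatives (a,b) with (K,a,b) \in C(k,l). *)
Definition WT (C : bgraph -> Prop) (G K : graph) (k l : nat)
  : tens (gn G) k l -> Prop :=
  fun v => exists a b : seq 'I_(gn K),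
    Ckl C k l (@BG K a b) /\ v = That G k l (@BG K a b).

Arguments CG C G k l : clear implicits.
Arguments WT C G K k l : clear implicits.

(* Main.v *)
Require Import Defs.
From mathcomp Require Import all_boot all_algebra all_field.
Set Implicit Arguments. Unset Strict Implicit. Unset Printing Implicit Defensive.


Definition Em (m : nat) : graph := Graph (@empty_rel_sym m).
Definition EZ (Z : graph) : graph := Em (gn Z).

Fixpoint ccm (m : nat) : seq 'I_m :=
  if m is m'.+1 then map (widen_ord (leqnSn m')) (ccm m') ++ [:: ord_max; ord_max]
  else [::].

Lemma ccm_cover m (v : 'I_m) : v \in ccm m.
Proof.
elim: m v => [|m IH] v; first by case: v.
rewrite /= mem_cat; have [lt|ge] := ltnP v m.
  have -> : v = widen_ord (leqnSn m) (Ordinal lt) by apply: val_inj.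
  have wi : injective (widen_ord (leqnSn m)) by move=> x y /(congr1 val) /= /val_inj.
  by rewrite mem_map // IH.
have -> : v = ord_max by apply: val_inj => /=; have := ltn_ord v; rewrite ltnS => h; apply/eqP; rewrite eqn_leq h ge.
by apply/orP; right; rewrite inE eqxx.
Qed.

Definition cover (n : nat) (t : seq 'I_n) := forall v, v \in t.

Lemma zip_diag n (t : seq 'I_n) v w : (v, w) \in zip t t -> v = w.
Proof. by elim: t => //= x t IH; rewrite inE => /orP [/eqP [-> ->] | /IH]. Qed.

Lemma zip_diag2 n (t : seq 'I_n) v : v \in t -> (v, v) \in zip t t.
Proof. by elim: t => //= x t IH; rewrite !inE => /orP [/eqP -> | /IH ->]; rewrite ?eqxx ?orbT. Qed.

Lemma ker_eq_refl n (t : seq 'I_n) : ker_eq t t.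
Proof.
split=> // u u' /=.
case: u => v w /zip_diag ->; case: u' => v' w' /zip_diag -> //.
Qed.

Lemma glue_comp (A B Z : graph) (t : seq 'I_(gn Z))
  (fA : 'I_(gn A) -> 'I_(gn Z)) (fB : 'I_(gn B) -> 'I_(gn Z)) :
  gn A = gn Z -> True -> True.
Proof. by []. Qed.

Lemma comp_out (C : bgraph -> Prop) (hC : skew_graph_category C) (Z : graph)
  (p t u : seq 'I_(gn Z)) :
  C (BG p t) -> C (@BG (EZ Z) t u) -> cover t -> C (BG p u).
Proof.
move=> hX hY cov.
have := @sgc_comp C hC (BG p t) (@BG (EZ Z) t u) Z id id hX hY (ker_eq_refl t).
rewrite !map_id; apply; split => //.
- by move=> z; left; exists z.
- move=> v w; split; first by move=> ->; exact: zip_diag2.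
  by move/zip_diag.
- move=> x y; split; first by move=> e; left; exists x, y.
  by case=> [[v [v' [<- <- e]]] | [w [w' [_ _ e]]]].
Qed.

Lemma comp_in (C : bgraph -> Prop) (hC : skew_graph_category C) (Z : graph)
  (u q p : seq 'I_(gn Z)) :
  C (@BG (EZ Z) u q) -> C (BG q p) -> cover q -> C (BG u p).
Proof.
move=> hX hY cov.
have := @sgc_comp C hC (@BG (EZ Z) u q) (BG q p) Z id id hX hY (ker_eq_refl q).
rewrite !map_id; apply; split => //.
- by move=> z; left; exists z.
- move=> v w; split; first by move=> ->; exact: zip_diag2.
  by move/zip_diag.
- move=> x y; split; first by move=> e; right; exists x, y.
  by case=> [[v [v' [_ _ e]]] | [w [w' [<- <- e]]]].
Qed.

Lemma comp_self (C : bgraph -> Prop) (hC : skew_graph_category C) (Z : graph)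
  (a t a' : seq 'I_(gn Z)) :
  C (BG a t) -> C (BG t a') -> cover t -> C (BG a a').
Proof.
move=> hX hY cov.
have := @sgc_comp C hC (BG a t) (BG t a') Z id id hX hY (ker_eq_refl t).
rewrite !map_id; apply; split => //.
- by move=> z; left; exists z.
- move=> v w; split; first by move=> ->; exact: zip_diag2.
  by move/zip_diag.
- move=> x y; split; first by move=> e; right; exists x, y.
  by case=> [[v [v' [<- <- e]]] | [w [w' [<- <- e]]]].
Qed.

Lemma union_id (C : bgraph -> Prop) (hC : skew_graph_category C) (Z : graph)
  (a b p q : seq 'I_(gn Z)) :
  C (BG a b) -> C (@BG (EZ Z) p q) -> C (BG (a ++ p) (b ++ q)).
Proof.
move=> hX hY.
have ov : overlap (fun (v : 'I_(gn Z)) (w : 'I_(gn (EZ Z))) => v == w).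
  by split=> v w w' /eqP <- /eqP.
have := @sgc_union C hC (BG a b) (@BG (EZ Z) p q) Z _ id id hX hY ov.
rewrite !map_id; apply; split => //.
- by move=> z; left; exists z.
- by move=> v w; split => [->|/eqP].
- move=> x y; split; first by move=> e; left; exists x, y.
  by case=> [[v [v' [<- <- e]]] | [w [w' [_ _ e]]]].
Qed.

Lemma union_M (C : bgraph -> Prop) (hC : skew_graph_category C) (Z : graph)
  (x : 'I_(gn Z)) (p q : seq 'I_(gn Mgraph)) (p' q' : seq 'I_(gn Z)) :
  C (BG p q) -> C (BG p' q') ->
  C (BG (map (fun _ => x) p ++ p') (map (fun _ => x) q ++ q')).
Proof.
move=> hX hY.
have ov : overlap (fun (v : 'I_(gn Mgraph)) (w : 'I_(gn Z)) => w == x).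
  split=> [v w w' /eqP -> /eqP -> //| v v' w _ _].
  by apply: val_inj; case: v => [[]] //; case: v' => [[]].
have := @sgc_union C hC (BG p q) (BG p' q') Z _ (fun _ => x) id hX hY ov.
rewrite !map_id; apply; split => //.
- by move=> v v' _; apply: val_inj; case: v => [[]] //; case: v' => [[]].
- by move=> z; right; exists z.
- by move=> v w; split => [->|/eqP ->].
- move=> a b; split; first by move=> e; right; exists a, b.
  by case=> [[v [v' [_ _ e]]] | [w [w' [<- <- e]]]].
Qed.

Lemma union_tau (C : bgraph -> Prop) (hC : skew_graph_category C) (H K : graph)
  (tau : 'I_(gn H) -> 'I_(gn K)) (c d : seq 'I_(gn H)) (a b : seq 'I_(gn K)) :
  injective tau -> (forall x y, gadj x y -> gadj (tau x) (tau y)) ->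
  C (BG c d) -> C (BG a b) -> C (BG (map tau c ++ a) (map tau d ++ b)).
Proof.
move=> itau htau hX hY.
have ov : overlap (fun (v : 'I_(gn H)) (w : 'I_(gn K)) => w == tau v).
  by split=> [v w w' /eqP -> /eqP -> // | v v' w /eqP -> /eqP /itau].
have := @sgc_union C hC (BG c d) (BG a b) K _ tau id hX hY ov.
rewrite !map_id; apply; split => //.
- by move=> z; right; exists z.
- by move=> v w; split => [->|/eqP ->].
- move=> x y; split; first by move=> e; right; exists x, y.
  by case=> [[v [v' [<- <- e]]] | [w [w' [<- <- e]]]]; [apply: htau|].
Qed.

Lemma Em_cc (C : bgraph -> Prop) (hC : skew_graph_category C) m :
  C (@BG (Em m) [::] (ccm m)).
Proof.
elim: m => [|m IH]; first exact: sgc_N0 hC.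
have ov : overlap (fun (v : 'I_(gn (Em m))) (w : 'I_(gn Mgraph)) => false) by [].
have := @sgc_union C hC (@BG (Em m) [::] (ccm m)) (@BG Mgraph [::] [:: vM; vM]) (Em m.+1) _ (widen_ord (leqnSn m)) (fun _ => ord_max) IH (sgc_M2 hC) ov.
move=> h; apply: h.
split => //.
- by move=> x y /(congr1 val) /= /val_inj.
- by move=> v v' _; apply: val_inj; case: v => [[]] //; case: v' => [[]].
- move=> z; have [lt|ge] := ltnP z m.
    by left; exists (Ordinal lt); apply: val_inj.
  right; exists vM; apply: val_inj => /=.
  by have := ltn_ord z; rewrite ltnS => h; apply/eqP; rewrite eqn_leq h ge.
- move=> v w; split => // /(congr1 val) /= e.
  by have := ltn_ord v; rewrite e ltnn.
- move=> x y; split => //.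
  by case=> [[v [v' [_ _ e]]] | [w [w' [_ _ e]]]].
Qed.


Lemma g_id (C : bgraph -> Prop) (hC : skew_graph_category C) (Z : graph)
  (s : seq 'I_(gn Z)) (w : seq 'I_(gn Z)) :
  C (BG s s) -> C (BG (w ++ s) (w ++ s)).
Proof.
move=> hs; elim: w => [|x w IH] //.
exact: (union_M hC x (sgc_M1 hC) IH).
Qed.

Lemma g_cup (C : bgraph -> Prop) (hC : skew_graph_category C) (Z : graph)
  (s t : seq 'I_(gn Z)) x :
  C (BG s t) -> C (BG s (x :: x :: t)).
Proof. move=> hs; exact: (union_M hC x (sgc_M2 hC) hs). Qed.

Lemma g_cup_in (C : bgraph -> Prop) (hC : skew_graph_category C) (Z : graph)
  (s t : seq 'I_(gn Z)) x :
  C (BG s t) -> C (BG (x :: x :: s) t).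
Proof. move=> hs; exact: (union_M hC x (sgc_inv hC (sgc_M2 hC)) hs). Qed.

Lemma g_red (C : bgraph -> Prop) (hC : skew_graph_category C) (Z : graph)
  (u v : seq 'I_(gn Z)) x :
  C (BG v v) -> C (BG (u ++ x :: x :: v) (u ++ v)).
Proof.
move=> hv; elim: u => [|y u IH] /=; first exact: g_cup_in.
exact: (union_M hC y (sgc_M1 hC) IH).
Qed.

Lemma cc_cover (K : graph) : cover (ccm (gn K)).
Proof. by move=> v; apply: ccm_cover. Qed.

Lemma cover_catr n (w t : seq 'I_n) : cover t -> cover (w ++ t).
Proof. by move=> h v; rewrite mem_cat h orbT. Qed.

Lemma cover_cons n (x : 'I_n) t : cover t -> cover (x :: t).
Proof. by move=> h v; rewrite inE h orbT. Qed.

Lemma E_cc2 (C : bgraph -> Prop) (hC : skew_graph_category C) (K : graph) :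
  C (@BG (EZ K) (ccm (gn K)) (ccm (gn K))).
Proof.
have h1 : C (@BG (EZ K) (ccm (gn K)) [::]) := sgc_inv hC (Em_cc hC (gn K)).
have h2 : C (@BG (EZ (EZ K)) [::] (ccm (gn K))) := Em_cc hC (gn K).
by have := union_id hC h1 h2; rewrite cats0.
Qed.

Lemma E_id (C : bgraph -> Prop) (hC : skew_graph_category C) (K : graph) w :
  C (@BG (EZ K) (w ++ ccm (gn K)) (w ++ ccm (gn K))).
Proof. exact: g_id (E_cc2 hC K). Qed.

Lemma rot (C : bgraph -> Prop) (hC : skew_graph_category C) (K : graph)
  (w t : seq 'I_(gn K)) x :
  C (BG (x :: w ++ ccm (gn K)) t) -> C (BG (w ++ ccm (gn K)) (x :: t)).
Proof.
move=> h.
have h1 := union_M hC x (sgc_M1 hC) h; simpl in h1.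
have h2 : C (@BG (EZ K) (w ++ ccm (gn K)) (x :: x :: w ++ ccm (gn K))).
  have := (@g_cup C hC (EZ K) _ _ x (E_id hC (K:=K) w)); exact.
apply: (comp_in hC h2 h1).
by apply: cover_cons; apply: cover_cons; apply: cover_catr; apply: cc_cover.
Qed.

Lemma rot_all (C : bgraph -> Prop) (hC : skew_graph_category C) (K : graph)
  (w t : seq 'I_(gn K)) :
  C (BG (w ++ ccm (gn K)) t) -> C (BG (ccm (gn K)) (rev w ++ t)).
Proof.
elim: w t => [|x w IH] t //= h.
rewrite rev_cons cat_rcons; apply: IH; exact: rot.
Qed.

Lemma red_all (C : bgraph -> Prop) (hC : skew_graph_category C) (K : graph)
  (p a : seq 'I_(gn K)) :
  C (BG p (rev a ++ a ++ ccm (gn K))) -> C (BG p (ccm (gn K))).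
Proof.
elim: a => [|x a IH] // h; apply: IH.
move: h; rewrite rev_cons cat_rcons /= => h.
apply: (comp_out hC h (@g_red C hC (EZ K) (rev a) (a ++ ccm (gn K)) x (E_id hC a))).
by apply: cover_catr; apply: cover_cons; apply: cover_cons; apply: cover_catr; apply: cc_cover.
Qed.

Lemma K_empty (C : bgraph -> Prop) (hC : skew_graph_category C) (K : graph)
  (a b : seq 'I_(gn K)) : C (BG a b) -> C (@BG K [::] [::]).
Proof.
move=> h.
have h1 := union_id hC h (E_cc2 hC K).
have h2 := comp_self hC h1 (sgc_inv hC h1) (cover_catr _ (@cc_cover K)).
have h3 := red_all hC (rot_all hC h2).
have caps : C (@BG (EZ K) (ccm (gn K)) [::]) := sgc_inv hC (Em_cc hC (gn K)).
have h4 := comp_out hC h3 caps (@cc_cover K).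
have h5 := sgc_inv hC h4; simpl in h5.
have := comp_out hC h5 caps (@cc_cover K). exact.
Qed.


Definition hom (A B : graph) (h : 'I_(gn A) -> 'I_(gn B)) :=
  forall x y, gadj x y -> gadj (h x) (h y).

Definition edges (A : graph) : {set 'I_(gn A) * 'I_(gn A)} :=
  [set p | gadj p.1 p.2].

Definition pmap2 (A B : graph) (h : 'I_(gn A) -> 'I_(gn B)) (p : 'I_(gn A) * 'I_(gn A)) :=
  (h p.1, h p.2).

Lemma pmap2_inj A B (h : 'I_(gn A) -> 'I_(gn B)) : injective h -> injective (pmap2 h).
Proof. by move=> ih [x y] [x' y'] [/ih -> /ih ->]. Qed.

Lemma edge_le A B (h : 'I_(gn A) -> 'I_(gn B)) :
  injective h -> hom h -> #|edges A| <= #|edges B|.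
Proof.
move=> ih hh; rewrite -(card_imset _ (pmap2_inj ih)); apply: subset_leq_card.
apply/subsetP => z /imsetP [[x y]]; rewrite inE /= => e ->.
by rewrite inE /=; apply: hh.
Qed.

Lemma edge_onto A B (h : 'I_(gn A) -> 'I_(gn B)) :
  injective h -> hom h -> #|edges B| <= #|edges A| ->
  forall x y, gadj x y -> exists u u', [/\ h u = x, h u' = y & gadj u u'].
Proof.
move=> ih hh le x y e.
have sub : [set pmap2 h p | p in edges A] \subset edges B.
  apply/subsetP => z /imsetP [[u u']]; rewrite inE /= => e' ->.
  by rewrite inE /=; apply: hh.
have : [set pmap2 h p | p in edges A] == edges B.
  by rewrite eqEcard sub card_imset //; apply: pmap2_inj.
move/eqP => eqE.
have : (x, y) \in edges B by rewrite inE.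
rewrite -eqE => /imsetP [[u u']]; rewrite inE /= => e' [-> ->].
by exists u, u'.
Qed.

Lemma image_glue (H K G : graph) (phi : 'I_(gn H) -> 'I_(gn G))
  (psi : 'I_(gn K) -> 'I_(gn G)) :
  injective phi -> injective psi -> hom phi -> hom psi ->
  exists U : graph, exists fK fH,
    @glue H K U (fun v w => phi v == psi w) fK fH /\ subgraph U G.
Proof.
move=> iphi ipsi hphi hpsi.
pose S : {set 'I_(gn G)} := [set z | [exists v, phi v == z] || [exists w, psi w == z]].
pose R (z z' : 'I_(gn G)) :=
  [exists v, exists v', [&& phi v == z, phi v' == z' & gadj v v']] ||
  [exists w, exists w', [&& psi w == z, psi w' == z' & gadj w w']].
have Rsym : symmetric R.
  move=> z z'; rewrite /R; apply/orP/orP.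
    case=> [/existsP [v /existsP [v' /and3P [e1 e2 e3]]] | /existsP [w /existsP [w' /and3P [e1 e2 e3]]]].
      by left; apply/existsP; exists v'; apply/existsP; exists v; rewrite e1 e2 gsym.
    by right; apply/existsP; exists w'; apply/existsP; exists w; rewrite e1 e2 gsym.
  case=> [/existsP [v /existsP [v' /and3P [e1 e2 e3]]] | /existsP [w /existsP [w' /and3P [e1 e2 e3]]]].
    by left; apply/existsP; exists v'; apply/existsP; exists v; rewrite e1 e2 gsym.
  by right; apply/existsP; exists w'; apply/existsP; exists w; rewrite e1 e2 gsym.
pose adjU (x y : 'I_#|S|) := R (enum_val x) (enum_val y).
have adjU_sym : symmetric adjU by move=> x y; apply: Rsym.
pose U := Graph adjU_sym.
have inS z : z \in S -> exists x : 'I_(gn U), enum_val x == z.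
  by move=> zS; exists (enum_rank_in zS z); rewrite enum_rankK_in.
have exK v : exists x : 'I_(gn U), enum_val x == phi v.
  by apply: inS; rewrite inE; apply/orP; left; apply/existsP; exists v.
have exH w : exists x : 'I_(gn U), enum_val x == psi w.
  by apply: inS; rewrite inE; apply/orP; right; apply/existsP; exists w.
pose fK v := xchoose (exK v).
pose fH w := xchoose (exH w).
have fKE v : enum_val (fK v) = phi v by apply/eqP; apply: (xchooseP (exK v)).
have fHE w : enum_val (fH w) = psi w by apply/eqP; apply: (xchooseP (exH w)).
have ev_inj : injective (@enum_val _ (mem S)) := enum_val_inj.
exists U, fK, fH; split; last first.
  exists enum_val; split => // x y; rewrite /= /adjU /R.
  case/orP=> [/existsP [v /existsP [v' /and3P [/eqP <- /eqP <- e]]] | /existsP [w /existsP [w' /and3P [/eqP <- /eqP <- e]]]].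
    exact: hphi.
  exact: hpsi.
split.
- by move=> v v' e; apply: iphi; rewrite -!fKE e.
- by move=> w w' e; apply: ipsi; rewrite -!fHE e.
- move=> z; have : enum_val z \in S by apply: enum_valP.
  rewrite inE => /orP [/existsP [v /eqP e] | /existsP [w /eqP e]].
    by left; exists v; apply: ev_inj; rewrite fKE.
  by right; exists w; apply: ev_inj; rewrite fHE.
- move=> v w; split => [e | /eqP e]; first by apply/eqP; rewrite -fKE -fHE e.
  by apply: ev_inj; rewrite fKE fHE.
- move=> x y; split.
    rewrite /= /adjU /R.
    case/orP=> [/existsP [v /existsP [v' /and3P [/eqP e1 /eqP e2 e]]] | /existsP [w /existsP [w' /and3P [/eqP e1 /eqP e2 e]]]].
      by left; exists v, v'; split => //; apply: ev_inj; rewrite fKE.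
    by right; exists w, w'; split => //; apply: ev_inj; rewrite fHE.
  case=> [[v [v' [<- <- e]]] | [w [w' [<- <- e]]]]; rewrite /= /adjU /R.
    by apply/orP; left; apply/existsP; exists v; apply/existsP; exists v'; rewrite !fKE !eqxx e.
  rewrite !fHE; by apply/orP; right; apply/existsP; exists w; apply/existsP; exists w'; rewrite !eqxx e.
Qed.


Lemma factor (C : bgraph -> Prop) (hC : skew_graph_category C) (G K : graph)
  (hmax : forall H : graph, subgraph H G -> fib_nonempty C H -> subgraph H K)
  (a b : seq 'I_(gn K)) (hY : C (BG a b))
  (H : graph) (c d : seq 'I_(gn H)) (hX : C (BG c d))
  (phi : 'I_(gn H) -> 'I_(gn G)) (psi : 'I_(gn K) -> 'I_(gn G)) :
  injective phi -> injective psi -> hom phi -> hom psi ->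
  exists tau : 'I_(gn H) -> 'I_(gn K), (forall v, phi v = psi (tau v)) /\ hom tau.
Proof.
move=> iphi ipsi hphi hpsi.
have [U [fK [fH [gl sUG]]]] := image_glue iphi ipsi hphi hpsi.
have ov : overlap (fun v w => phi v == psi w).
  split=> [v w w' /eqP e1 /eqP e2 | v v' w /eqP e1 /eqP e2]; [apply: ipsi | apply: iphi]; by rewrite -?e1 -?e2 ?e1 ?e2.
have hU := @sgc_union C hC (BG c d) (BG a b) U _ fK fH hX hY ov gl.
have [h [ih hh]] : subgraph U K.
  apply: hmax => //; eexists; do 2 eexists; split; first exact: hU; reflexivity.
case: gl => ifK ifH _ eqv edg.
have hfH : hom fH by move=> x y e; apply/edg; right; exists x, y.
have hfK : hom fK by move=> x y e; apply/edg; left; exists x, y.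
have cardV : #|'I_(gn U)| <= #|'I_(gn K)| := leq_card h ih.
have onto z : exists w, fH w == z.
  have := inj_card_onto ifH cardV z => /codomP [w ->]; by exists w.
pose tau v := xchoose (onto (fK v)).
have tauE v : fH (tau v) = fK v by apply/eqP; apply: (xchooseP (onto (fK v))).
have tauP v : phi v = psi (tau v) by apply/eqP; apply/eqv; rewrite tauE.
exists tau; split => // x y e.
have := edge_onto ifH hfH (edge_le ih hh) (hfK _ _ e).
move=> [u [u' [e1 e2 e3]]].
have -> : tau x = u by apply: ifH; rewrite tauE.
have -> : tau y = u' by apply: ifH; rewrite tauE.
done.
Qed.

Import GRing.Theory.

Lemma inj_homsP (K G : graph) (phi : {ffun 'I_(gn K) -> 'I_(gn G)}) :
  phi \in inj_homs K G <-> injective phi /\ hom phi.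
Proof.
rewrite inE; split.
  case/andP => /injectiveP ip /forallP hp; split => // x y e.
  by have /forallP /(_ y) /implyP := hp x; apply.
case=> ip hp; apply/andP; split; first by apply/injectiveP.
by apply/forallP => x; apply/forallP => y; apply/implyP; apply: hp.
Qed.

Definition compf (H K G : graph) (psi : {ffun 'I_(gn K) -> 'I_(gn G)})
  (tau : {ffun 'I_(gn H) -> 'I_(gn K)}) : {ffun 'I_(gn H) -> 'I_(gn G)} :=
  [ffun v => psi (tau v)].

Lemma map_compf H K G psi tau (s : seq 'I_(gn H)) :
  map (@compf H K G psi tau) s = map psi (map tau s).
Proof. by rewrite -map_comp; apply: eq_map => v; rewrite ffunE. Qed.

Definition Aset (G : graph) k l (X : bgraph) (ji : l.-tuple 'I_(gn G) * k.-tuple 'I_(gn G)) :=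
  [set phi in inj_homs (bgr X) G |
                  (map phi (bin X) == val ji.2) && (map phi (bout X) == val ji.1)].

Lemma ThatE G k l X ji : That G k l X ji = (#|Aset X ji|%:R)%R.
Proof. by rewrite ffunE. Qed.

Lemma card_set_sum (T : finType) (D : {set T}) (P : pred T) :
  #|[set x in D | P x]| = \sum_(x in D) (P x : nat).
Proof.
rewrite -sum1_card big_mkcond [RHS]big_mkcond /=; apply: eq_bigr => x _.
by rewrite !inE; case: (x \in D); case: (P x).
Qed.

Lemma count_eq (H K G : graph) k l (c d : seq 'I_(gn H)) ji :
  (forall (phi : 'I_(gn H) -> 'I_(gn G)) (psi : 'I_(gn K) -> 'I_(gn G)),
     injective phi -> injective psi -> hom phi -> hom psi ->
     exists tau : 'I_(gn H) -> 'I_(gn K), (forall v, phi v = psi (tau v)) /\ hom tau) ->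
  \sum_(tau in inj_homs H K) #|Aset (@BG K (map tau c) (map tau d)) ji| =
  #|inj_homs K G| * #|@Aset G k l (BG c d) ji|.
Proof.
move=> hf.
pose P (tau : {ffun 'I_(gn H) -> 'I_(gn K)}) (psi : {ffun 'I_(gn K) -> 'I_(gn G)}) :=
  (map psi (map tau c) == val ji.2) && (map psi (map tau d) == val ji.1).
transitivity (\sum_(tau in inj_homs H K) \sum_(psi in inj_homs K G) (P tau psi : nat)).
  by apply: eq_bigr => tau _; rewrite /Aset /= card_set_sum.
rewrite exchange_big /= -sum_nat_const; apply: eq_bigr => psi /inj_homsP [ipsi hpsi].
rewrite -card_set_sum.
have cinj : injective (@compf H K G psi).
  move=> t1 t2 /ffunP e; apply/ffunP => v; apply: ipsi; have := e v; rewrite !ffunE; done.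
rewrite -(card_imset _ cinj); apply: eq_card => phi; apply/imsetP/idP.
  case=> tau; rewrite inE => /andP [/inj_homsP [itau htau] Pt] ->.
  rewrite /Aset inE /= !map_compf; rewrite /P in Pt; rewrite Pt andbT; apply/inj_homsP; split.
    by move=> x y; rewrite !ffunE => /ipsi /itau.
  by move=> x y e; rewrite !ffunE; apply: hpsi; apply: htau.
rewrite /Aset inE => /andP [/inj_homsP [iphi hphi] Pp].
have [t0 [t0E ht0]] := hf phi psi iphi ipsi hphi hpsi.
pose tau : {ffun 'I_(gn H) -> 'I_(gn K)} := [ffun v => t0 v].
have ephi : phi = compf psi tau by apply/ffunP => v; rewrite !ffunE t0E.
exists tau => //; rewrite inE; apply/andP; split.
  apply/inj_homsP; split.
    by move=> x y; rewrite !ffunE => e; apply: iphi; rewrite !t0E e.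
  by move=> x y e; rewrite !ffunE; apply: ht0.
by rewrite /P -!map_compf -ephi.
Qed.

Lemma That_aut (K G : graph) k l (sigma : 'I_(gn K) -> 'I_(gn K)) (a b : seq 'I_(gn K)) :
  injective sigma -> hom sigma ->
  That G k l (BG (map sigma a) (map sigma b)) = That G k l (BG a b).
Proof.
move=> isg hsg; apply/ffunP => ji; rewrite !ffunE; congr (_%:R)%R.
have [sg' sgK sgK'] := injF_bij isg.
have hsg' : hom sg'.
  move=> x y e; have [u [u' [<- <- e']]] := edge_onto isg hsg (leqnn _) e.
  by rewrite !sgK.
pose S : {ffun 'I_(gn K) -> 'I_(gn K)} := [ffun v => sigma v].
have cinj : injective (fun psi => @compf K K G psi S).
  move=> p1 p2 /ffunP e; apply/ffunP => v; have := e (sg' v); rewrite !ffunE sgK'; done.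
rewrite -(card_imset _ cinj); apply: eq_card => phi; apply/imsetP/idP.
  case=> psi; rewrite inE => /andP [/inj_homsP [ipsi hpsi] Pt] ->.
  rewrite inE /= !map_compf.
  have -> : map S a = map sigma a by apply: eq_map => v; rewrite ffunE.
  have -> : map S b = map sigma b by apply: eq_map => v; rewrite ffunE.
  rewrite Pt andbT; apply/inj_homsP; split.
    by move=> x y; rewrite !ffunE => /ipsi /isg.
  by move=> x y e; rewrite !ffunE; apply: hpsi; apply: hsg.
rewrite inE => /andP [/inj_homsP [iphi hphi] Pp].
pose psi : {ffun 'I_(gn K) -> 'I_(gn G)} := [ffun v => phi (sg' v)].
have ephi : phi = compf psi S by apply/ffunP => v; rewrite !ffunE sgK.
exists psi => //; rewrite inE; apply/andP; split.
  apply/inj_homsP; split.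
    by move=> x y; rewrite !ffunE => /iphi e; rewrite -(sgK' x) -(sgK' y) e.
  by move=> x y e; rewrite !ffunE; apply: hphi; apply: hsg'.
move: Pp; rewrite /= ephi !map_compf.
have -> : map S a = map sigma a by apply: eq_map => v; rewrite ffunE.
by have -> : map S b = map sigma b by apply: eq_map => v; rewrite ffunE.
Qed.

Import GRing.Theory Num.Theory.
Local Open Scope ring_scope.

Lemma span_gen (R : pzRingType) (V : lmodType R) (P : V -> Prop) v :
  P v -> lin_span P v.
Proof.
move=> Pv; exists 1%N, (fun _ => v), (fun _ => 1); split => //.
by rewrite big_ord1 scale1r.
Qed.

Lemma span0 (R : pzRingType) (V : lmodType R) (P : V -> Prop) : lin_span P 0.
Proof. by exists 0%N, (fun _ => 0), (fun _ => 0); split => [[]|]; rewrite ?big_ord0. Qed.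

Lemma spanD (R : pzRingType) (V : lmodType R) (P : V -> Prop) u v :
  lin_span P u -> lin_span P v -> lin_span P (u + v).
Proof.
move=> [m1 [vs1 [c1 [P1 ->]]]] [m2 [vs2 [c2 [P2 ->]]]].
exists (m1 + m2)%N, (fun i => match split i with inl a => vs1 a | inr b => vs2 b end),
  (fun i => match split i with inl a => c1 a | inr b => c2 b end); split.
  by move=> i; case: (split i).
rewrite big_split_ord /=; congr (_ + _); apply: eq_bigr => i _.
  by rewrite (unsplitK (inl i : 'I_m1 + 'I_m2)).
by rewrite (unsplitK (inr i : 'I_m1 + 'I_m2)).
Qed.

Lemma spanZ (R : pzRingType) (V : lmodType R) (P : V -> Prop) a v :
  lin_span P v -> lin_span P (a *: v).
Proof.
move=> [m [vs [c [Pv ->]]]]; exists m, vs, (fun i => a * c i); split => //.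
by rewrite scaler_sumr; apply: eq_bigr => i _; rewrite scalerA.
Qed.

Lemma span_sum (R : pzRingType) (V : lmodType R) (P : V -> Prop) m
  (vs : 'I_m -> V) (c : 'I_m -> R) :
  (forall i, lin_span P (vs i)) -> lin_span P (\sum_(i < m) c i *: vs i).
Proof.
elim: m vs c => [|m IH] vs c h; first by rewrite big_ord0; apply: span0.
rewrite big_ord_recr /=; apply: spanD; last by apply: spanZ.
exact: IH (fun i => vs (widen_ord (leqnSn m) i)) (fun i => c (widen_ord (leqnSn m) i)) (fun i => h _).
Qed.

Lemma span_mono (R : pzRingType) (V : lmodType R) (P Q : V -> Prop) v :
  (forall w, P w -> lin_span Q w) -> lin_span P v -> lin_span Q v.
Proof. by move=> h [m [vs [c [Pv ->]]]]; apply: span_sum => i; apply: h. Qed.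

Import GRing.Theory Num.Theory.
Local Open Scope ring_scope.

Theorem proposition4p16 (C : bgraph -> Prop) (G K : graph) :
  skew_graph_category C ->
  subgraph K G -> fib_nonempty C K ->
  (forall H : graph, subgraph H G -> fib_nonempty C H -> subgraph H K) ->
  forall k l : nat, is_basis_of (CG C G k l) (WT C G K k l).
Proof.
move=> hC [h0 [ih0 hh0]] [g [a0 [b0 [hY _]]]] hmax k l.
pose psi0 : {ffun 'I_(gn K) -> 'I_(gn G)} := [ffun x => h0 x].
have psi0P : psi0 \in inj_homs K G.
  apply/inj_homsP; split; first by move=> x y; rewrite !ffunE; apply: ih0.
  by move=> x y e; rewrite !ffunE; apply: hh0.
have hE : C (@BG K [::] [::]) := K_empty hC hY.
have TX : forall X, Ckl C k l X -> lin_span (WT C G K k l) (That G k l X).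
  case=> H c d [hX sc sd] /=.
  pose T := inj_homs H K.
  pose N := #|inj_homs K G|.
  have N0 : (N%:R : algC) != 0%R.
    by rewrite pnatr_eq0 -lt0n; apply/card_gt0P; exists psi0.
  have hf := fun phi psi => @factor C hC G K hmax a0 b0 hY H c d hX phi psi.
  pose ev (i : 'I_#|T|) : {ffun 'I_(gn H) -> 'I_(gn K)} := enum_val i.
  exists #|T|, (fun i => That G k l (@BG K (map (ev i) c) (map (ev i) d))),
    (fun _ => (N%:R)^-1)%R; split.
    move=> i; exists (map (ev i) c), (map (ev i) d); split => //.
    have /inj_homsP [it ht] : ev i \in T := enum_valP i.
    split; [ | by rewrite size_map | by rewrite size_map].
    by have := union_tau hC it ht hX hE; rewrite !cats0.
  apply/ffunP => ji; rewrite sum_ffunE ThatE.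
  under eq_bigr do rewrite ffunE ThatE.
  rewrite -(big_enum_val (A := mem T) (fun tau : {ffun 'I_(gn H) -> 'I_(gn K)} =>
       ((N%:R)^-1 *: (#|Aset (@BG K (map tau c) (map tau d)) ji|%:R : algC^o))%R)) /=.
  rewrite -GRing.mulr_sumr -natr_sum (@count_eq H K G k l c d ji hf) natrM mulKf //.
split.
  move=> v; split.
    by apply: span_mono => w [X [hX ->]]; apply: TX.
  apply: span_mono => w [a [b [hab ->]]]; apply: span_gen.
  by exists (BG a b).
move=> m vs cf ivs Pvs hsum i0.
have [a [b [[hab sa sb] e0]]] := Pvs i0.
have sb' : size (map psi0 b) == l by rewrite size_map sb.
have sa' : size (map psi0 a) == k by rewrite size_map sa.
pose p : l.-tuple 'I_(gn G) * k.-tuple 'I_(gn G) := (Tuple sb', Tuple sa').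
have hs := congr1 (fun f : tens (gn G) k l => f p) hsum; simpl in hs.
rewrite sum_ffunE ffunE (bigD1 i0) //= big1 ?addr0 in hs; last first.
  move=> j nj; rewrite ffunE.
  have [a' [b' [[hab' sa2 sb2] ej]]] := Pvs j.
  rewrite ej ThatE.
  case: (posnP #|Aset (@BG K a' b') p|) => [-> | /card_gt0P [psi]]; first by rewrite mulr0n scaler0.
  rewrite inE => /andP [/inj_homsP [ipsi hpsi] /andP [/eqP ea /eqP eb]].
  have ipsi0 : injective psi0 by move=> x y; rewrite !ffunE => /ih0.
  have hpsi0 : hom psi0 by move=> x y e; rewrite !ffunE; apply: hh0.
  have [sg [sgE hsg]] := @factor C hC G K hmax a0 b0 hY K a' b' hab' psi psi0 ipsi
    ipsi0 hpsi hpsi0.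
  have isg : injective sg by move=> x y e; apply: ipsi; rewrite !sgE e.
  have ma : map sg a' = a.
    apply: (inj_map ipsi0); rewrite -map_comp.
    have -> : map psi0 a = map psi a' by rewrite ea.
    by apply: eq_map => v; rewrite /= sgE.
  have mb : map sg b' = b.
    apply: (inj_map ipsi0); rewrite -map_comp.
    have -> : map psi0 b = map psi b' by rewrite eb.
    by apply: eq_map => v; rewrite /= sgE.
  have : vs j = vs i0 by rewrite ej e0 -ma -mb That_aut.
  by move/ivs => eji; rewrite eji eqxx in nj.
move: hs; rewrite e0 ffunE ThatE => /eqP; rewrite mulf_eq0 pnatr_eq0 => /orP [/eqP //|].
move/eqP/card0_eq/(_ psi0).
by rewrite inE psi0P /= !eqxx.
Qed.
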